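(* Let $e_1,e_2,e_3$ be nonzero integers with $e_1+e_2+e_3=0$. Let $\Lambda=(d_1,d_2,d_3)$ be a triple of nonzero square-free integers with $d_1d_2d_3$ a square. Let $n$ be a positive square-free integer coprime with $e_1e_2e_3$ and $p$ an odd prime factor of $n$. Then $D^{(n)}_\Lambda(\mathbb{Q}_p)\neq\emptyset$ if and only if - $\left(\frac{d_1}{p}\right)=\left(\frac{d_2}{p}\right)=\left(\frac{d_3}{p}\right)=1$, in case $p\nmid d_1d_2d_3$; - $\left(\frac{-e_2e_3d_1}{p}\right)=\left(\frac{e_3n/d_2}{p}\right)=\left(\frac{-e_2n/d_3}{p}\right)=1$, in case $p\nmid d_1$, $p\mid d_2$, $p\mid d_3$; - $\left(\frac{-e_3n/d_1}{p}\right)=\left(\frac{-e_3e_1d_2}{p}\right)=\left(\frac{e_1n/d_3}{p}\right)=1$, in case $p\mid d_1$, $p\nmid d_2$, $p\mid d_3$; - $\left(\frac{e_2n/d_1}{p}\right)=\left(\frac{-e_1n/d_2}{p}\right)=\left(\frac{-e_1e_2d_3}{p}\right)=1$, in case $p\mid d_1$, $p\mid d_2$, $p\nmid d_3$.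
   Context: $D^{(n)}_\Lambda$ is the curve in $\mathbb{P}^3$ with coordinates $(t,u_1,u_2,u_3)$ defined by $e_1nt^2+d_2u_2^2-d_3u_3^2=0$, $e_2nt^2+d_3u_3^2-d_1u_1^2=0$, $e_3nt^2+d_1u_1^2-d_2u_2^2=0$. For a rational number $r$ which is a $p$-adic unit, $\left(\frac{r}{p}\right)$ is the Legendre symbol of its reduction modulo $p$ (so the arguments $n/d_i$ above, with $p\mid d_i$, are $p$-adic units). *)

(* Defs.v *)
From HB Require Import structures.
From mathcomp Require Import all_boot all_order all_algebra.
Set Implicit Arguments. Unset Strict Implicit. Unset Printing Implicit Defensive.
Import Order.TTheory GRing.Theory Num.Theory.
Local Open Scope ring_scope.

Definition sqfree (n : nat) : Prop :=
  forall q : nat, prime q -> ~~ (q * q %| n)%N.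

Definition sqfreez (d : int) : Prop := sqfree (absz d).

(* An element of Z_p = lim Z/p^k Z is represented by integers x k (k : nat),
   x k being a representative of its image in Z/p^k, with the compatibility
   x (k+1) = x k mod p^k. *)
Definition Zp_coherent (p : nat) (x : nat -> int) : Prop :=
  forall k : nat, (x k.+1 == x k %[mod (p ^ k)%:Z])%Z.

Definition Zp_nonzero (p : nat) (x : nat -> int) : Prop :=
  exists k : nat, ~~ ((p ^ k)%:Z %| x k)%Z.

Definition D_forms (e1 e2 e3 d1 d2 d3 : int) (n : nat)
    (t u1 u2 u3 : int) : int * int * int :=
  (e1 * n%:Z * t ^+ 2 + d2 * u2 ^+ 2 - d3 * u3 ^+ 2,
   e2 * n%:Z * t ^+ 2 + d3 * u3 ^+ 2 - d1 * u1 ^+ 2,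
   e3 * n%:Z * t ^+ 2 + d1 * u1 ^+ 2 - d2 * u2 ^+ 2).

(* D^{(n)}_Lambda(Q_p) is nonempty: there is a point (t:u1:u2:u3) of P^3(Q_p)
   on the curve.  Clearing denominators (the equations are homogeneous), this
   is the existence of a nonzero vector (t,u1,u2,u3) in Z_p^4 satisfying the
   three equations in Z_p, i.e. componentwise modulo every p^k. *)
Definition D_Qp_nonempty (p : nat) (e1 e2 e3 d1 d2 d3 : int) (n : nat) : Prop :=
  exists t u1 u2 u3 : nat -> int,
    [/\ [/\ Zp_coherent p t, Zp_coherent p u1, Zp_coherent p u2 & Zp_coherent p u3],
        (Zp_nonzero p t \/ Zp_nonzero p u1 \/ Zp_nonzero p u2 \/ Zp_nonzero p u3)
      & forall k : nat,
        let F := D_forms e1 e2 e3 d1 d2 d3 n (t k) (u1 k) (u2 k) (u3 k) in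
        [/\ ((p ^ k)%:Z %| F.1.1)%Z, ((p ^ k)%:Z %| F.1.2)%Z
           & ((p ^ k)%:Z %| F.2)%Z]].

Definition legendreF (p : nat) (x : 'F_p) : int :=
  if x == 0 then 0 else if [exists y : 'F_p, y ^+ 2 == x] then 1 else -1.

(* Reduction modulo p of a rational number (meaningful when r is a p-adic
   unit, i.e. p divides neither numerator nor denominator). *)
Definition redp (p : nat) (r : rat) : 'F_p :=
  (numq r)%:~R / (denq r)%:~R.

Definition legendre (r : rat) (p : nat) : int := legendreF (redp p r).

(* Main.v *)
Require Import Defs.
From mathcomp Require Import all_boot all_order all_algebra.
From mathcomp Require Import ring zify.
Import Order.TTheory GRing.Theory Num.Theory.
Set Implicit Arguments. Unset Strict Implicit.
Local Open Scope ring_scope.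

Lemma PoszX' (p k : nat) : (p ^ k)%:Z = (p%:Z) ^+ k.
Proof. by rewrite -!natz natrX. Qed.

Section Fp.
Variable p : nat.
Hypothesis pp : prime p.
Local Notation P := (p%:Z).
Local Notation phi z := (z%:~R : 'F_p).

Lemma phi0 (z : int) : (P %| z)%Z = (phi z == 0).
Proof. apply: dvdz_pcharf. exact: pchar_Fp. Qed.

Lemma phi_inv (x : 'F_p) : phi ((x : nat)%:Z) = x.
Proof.
apply: val_inj => /=; rewrite val_Fp_nat // modn_small //.
have := ltn_ord x; move: (nat_of_ord x) => m.
by rewrite Fp_cast.
Qed.

Lemma coh_le (x : nat -> int) : Zp_coherent p x ->
  forall j k, (j <= k)%N -> (P ^+ j %| x k - x j)%Z.
Proof.
move=> hx j; elim=> [|k IH].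
  by rewrite leqn0 => /eqP ->; rewrite subrr dvdz0.
rewrite leq_eqVlt => /orP [/eqP ->|]; first by rewrite subrr dvdz0.
rewrite ltnS => hjk.
have -> : x k.+1 - x j = (x k.+1 - x k) + (x k - x j) by ring.
apply: rpredD; last exact: IH.
have := hx k; rewrite eqz_mod_dvd PoszX' => h.
exact: dvdz_trans (dvdz_exp2l _ hjk) h.
Qed.


Lemma phi2 : odd p -> phi 2 != 0.
Proof.
move=> op; rewrite -phi0 dvdzE /=.
apply/negP => h; have := dvdn_leq (isT : (0 < 2)%N) h; have := prime_gt1 pp.
by case: p op pp h => [|[|[|]]].
Qed.

Lemma hensel (a y : int) : odd p -> phi a != 0 -> (P %| y ^+ 2 - a)%Z ->
  exists r : nat -> int, Zp_coherent p r /\ (forall k, ((p ^ k)%:Z %| r k ^+ 2 - a)%Z).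
Proof.
move=> op ha hy.
have hy0 : phi y != 0.
  apply: contra ha => /eqP h0; move: hy; rewrite phi0 rmorphB /= rmorphXn /= h0.
  by rewrite expr0n /= sub0r oppr_eq0.
pose x := (phi (2 * y))^-1.
pose w := ((x : nat)%:Z).
have hw : (P %| 1 - 2 * y * w)%Z.
  rewrite phi0 rmorphB /= rmorph1 rmorphM /= phi_inv /x mulfV ?subrr //.
  by rewrite rmorphM mulf_neq0 // phi2.
have /dvdzP [h eh] := hw.
pose s := fix s k := if k is k'.+1 then s k' - (s k' ^+ 2 - a) * w else y.
have inv : forall k, (P ^+ k.+1 %| s k ^+ 2 - a)%Z && (P %| s k - y)%Z.
  elim=> [|k /andP [h1 h2]]; first by rewrite /= expr1 hy subrr dvdz0.
  have /dvdzP [c ec] := h1; have /dvdzP [g eg] := h2.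
  have -> : s k.+1 = s k - (s k ^+ 2 - a) * w by [].
  apply/andP; split.
    have e1 : (s k - (s k ^+ 2 - a) * w) ^+ 2 - a =
      (s k ^+ 2 - a) * ((1 - 2 * y * w) - 2 * w * (s k - y)) + (s k ^+ 2 - a) ^+ 2 * w ^+ 2.
      by ring.
    rewrite e1 ec eh eg; apply/dvdzP.
    exists (c * (h - 2 * w * g) + c ^+ 2 * w ^+ 2 * P ^+ k).
    rewrite !exprS; ring.
  have -> : s k - (s k ^+ 2 - a) * w - y = (s k - y) - (s k ^+ 2 - a) * w by ring.
  rewrite ec eg; apply/dvdzP; exists (g - c * P ^+ k * w); rewrite exprS; ring.
exists s; split.
  move=> k; rewrite eqz_mod_dvd PoszX'.
  have -> : s k.+1 - s k = - ((s k ^+ 2 - a) * w) by rewrite /=; ring.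
  rewrite rpredN; apply: dvdz_mulr.
  by case/andP: (inv k) => h1 _; apply: dvdz_trans h1; apply: dvdz_exp2l.
move=> k; rewrite PoszX'.
by case/andP: (inv k) => h1 _; apply: dvdz_trans h1; apply: dvdz_exp2l.
Qed.


Lemma nz_lift (x : nat -> int) : Zp_coherent p x -> Zp_nonzero p x ->
  exists k0, forall K, (k0 <= K)%N -> ~~ (P ^+ k0 %| x K)%Z.
Proof.
move=> hc [k0 hk0]; exists k0 => K hK; apply: contra hk0 => h.
rewrite PoszX'.
have -> : x k0 = x K - (x K - x k0) by ring.
by apply: rpredB => //; apply: coh_le.
Qed.

Definition F1 (e1 e2 e3 d1 d2 d3 : int) (n : nat) (t u1 u2 u3 : int) :=
  e1 * n%:Z * t ^+ 2 + d2 * u2 ^+ 2 - d3 * u3 ^+ 2.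
Definition F2 (e1 e2 e3 d1 d2 d3 : int) (n : nat) (t u1 u2 u3 : int) :=
  e2 * n%:Z * t ^+ 2 + d3 * u3 ^+ 2 - d1 * u1 ^+ 2.
Definition F3 (e1 e2 e3 d1 d2 d3 : int) (n : nat) (t u1 u2 u3 : int) :=
  e3 * n%:Z * t ^+ 2 + d1 * u1 ^+ 2 - d2 * u2 ^+ 2.

Lemma aux_le m k0 : (m < k0)%N -> (m + m + 2 <= 2 * k0)%N.
Proof. lia. Qed.

Lemma descent e1 e2 e3 d1 d2 d3 n :
  D_Qp_nonempty p e1 e2 e3 d1 d2 d3 n ->
  exists T U1 U2 U3 : int,
    [/\ ~~ [&& (P %| T)%Z, (P %| U1)%Z, (P %| U2)%Z & (P %| U3)%Z],
        (P ^+ 2 %| F1 e1 e2 e3 d1 d2 d3 n T U1 U2 U3)%Z,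
        (P ^+ 2 %| F2 e1 e2 e3 d1 d2 d3 n T U1 U2 U3)%Z &
        (P ^+ 2 %| F3 e1 e2 e3 d1 d2 d3 n T U1 U2 U3)%Z].
Proof.
move=> [t [u1 [u2 [u3 [[ct c1 c2 c3] hnz hF]]]]].
have [k0 hk0] : exists k0, ~~ [&& (P ^+ k0 %| t (2 * k0)%N)%Z,
    (P ^+ k0 %| u1 (2 * k0)%N)%Z, (P ^+ k0 %| u2 (2 * k0)%N)%Z
    & (P ^+ k0 %| u3 (2 * k0)%N)%Z].
  have hle : forall k, (k <= 2 * k)%N by move=> k; rewrite mul2n -addnn leq_addr.
  case: hnz => [h|[h|[h|h]]].
  - have [k hk] := nz_lift ct h; exists k; rewrite (negbTE (hk _ (hle k))) //.
  - have [k hk] := nz_lift c1 h; exists k; rewrite (negbTE (hk _ (hle k))) andbF //.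
  - have [k hk] := nz_lift c2 h; exists k; rewrite (negbTE (hk _ (hle k))) !andbF //.
  - have [k hk] := nz_lift c3 h; exists k; rewrite (negbTE (hk _ (hle k))) !andbF //.
set K := (2 * k0)%N in hk0.
pose Q m := [&& (P ^+ m %| t K)%Z, (P ^+ m %| u1 K)%Z, (P ^+ m %| u2 K)%Z
    & (P ^+ m %| u3 K)%Z].
have Q0 : exists m, Q m by exists 0%N; rewrite /Q !expr0 !dvd1z.
have Qub : forall m, Q m -> (m <= k0)%N.
  move=> m Qm; rewrite leqNgt; apply/negP => hlt; apply: (negP hk0).
  have hd : (P ^+ k0 %| P ^+ m)%Z by apply: dvdz_exp2l; exact: ltnW.
  by case/and4P: Qm => *; apply/and4P; split; apply: dvdz_trans hd _.
case: (ex_maxnP Q0 Qub) => m Qm Qmax.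
have nQ : ~~ Q m.+1 by apply/negP => /Qmax; rewrite ltnn.
have mlt : (m < k0)%N.
  rewrite ltn_neqAle Qub // andbT; apply/negP => /eqP em.
  by rewrite -em in hk0; case/negP: hk0; exact: Qm.
case/and4P: Qm => /dvdzP [T eT] /dvdzP [U1 eU1] /dvdzP [U2 eU2] /dvdzP [U3 eU3].
have P0 : P != 0 by rewrite eqz_nat; case: p pp.
have Pm0 : P ^+ m * P ^+ m != 0 by rewrite mulf_neq0 // expf_neq0.
exists T, U1, U2, U3; split.
- apply: contra nQ => /and4P [h1 h2 h3 h4].
  rewrite /Q eT eU1 eU2 eU3 exprSr.
  by apply/and4P; split; rewrite mulrC dvdz_mul2l ?expf_neq0.
- have := hF K; case=> h _ _; rewrite PoszX' /= in h.
  have eF : (P ^+ m * P ^+ m) * F1 e1 e2 e3 d1 d2 d3 n T U1 U2 U3 = e1 * n%:Z * t K ^+ 2 + d2 * u2 K ^+ 2 - d3 * u3 K ^+ 2.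
    by rewrite eT eU2 eU3 /F1; ring.
  rewrite -(dvdz_mul2l Pm0) eF; apply: (@dvdz_trans (P ^+ K)); last exact: h.
  rewrite -!exprD; apply: dvdz_exp2l; exact: aux_le.
- have := hF K; case=> _ h _; rewrite PoszX' /= in h.
  have eF : (P ^+ m * P ^+ m) * F2 e1 e2 e3 d1 d2 d3 n T U1 U2 U3 = e2 * n%:Z * t K ^+ 2 + d3 * u3 K ^+ 2 - d1 * u1 K ^+ 2.
    by rewrite eT eU1 eU3 /F2; ring.
  rewrite -(dvdz_mul2l Pm0) eF; apply: (@dvdz_trans (P ^+ K)); last exact: h.
  rewrite -!exprD; apply: dvdz_exp2l; exact: aux_le.
- have := hF K; case=> _ _ h; rewrite PoszX' /= in h.
  have eF : (P ^+ m * P ^+ m) * F3 e1 e2 e3 d1 d2 d3 n T U1 U2 U3 = e3 * n%:Z * t K ^+ 2 + d1 * u1 K ^+ 2 - d2 * u2 K ^+ 2.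
    by rewrite eT eU1 eU2 /F3; ring.
  rewrite -(dvdz_mul2l Pm0) eF; apply: (@dvdz_trans (P ^+ K)); last exact: h.
  rewrite -!exprD; apply: dvdz_exp2l; exact: aux_le.
Qed.

Lemma legendreF1 (x : 'F_p) :
  legendreF x = 1 <-> (x != 0 /\ exists y, y ^+ 2 = x).
Proof.
rewrite /legendreF; case: eqP => [->|/eqP hx].
  by split=> [/eqP|[]].
case: existsP => [[y /eqP hy]|hn].
  by split=> [_|//]; split=> //; exists y.
by split=> [/eqP|[_ [y hy]]] //; case: hn; exists y; rewrite hy.
Qed.

Lemma redp_frac (a b : int) : ~~ (P %| b)%Z ->
  redp p (a%:~R / b%:~R) = phi a / phi b.
Proof.
move=> hb; set r : rat := a%:~R / b%:~R.
have hb0 : b != 0 by apply: contra hb => /eqP ->; exact: dvdz0.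
have hbF : phi b != 0 by rewrite -phi0.
have E : numq r * b = a * denq r.
  apply: (@intr_inj rat); rewrite !intrM.
  have dr0 : ((denq r)%:~R : rat) != 0 by rewrite intr_eq0 denq_neq0.
  rewrite -[((numq r)%:~R : rat)](divfK dr0) divq_num_den /r.
  by field; rewrite intr_eq0.
have EF : phi (numq r) * phi b = phi a * phi (denq r) by rewrite -!intrM E.
have hd : phi (denq r) != 0.
  apply/negP => /eqP hd0; move: EF; rewrite hd0 mulr0 => /eqP.
  rewrite mulf_eq0 (negbTE hbF) orbF -phi0 => hn.
  move: hd0 => /eqP; rewrite -phi0 => hd.
  have := coprime_num_den r; rewrite /coprime => /eqP g.
  move: hn hd; rewrite !dvdzE /= => hn hd.
  have : (p %| gcdn `|numq r| `|denq r|)%N by rewrite dvdn_gcd hn hd.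
  by rewrite g dvdn1 => /eqP p1; move: pp; rewrite p1.
rewrite /redp; apply/eqP; rewrite eqr_div // EF mulrC //.
Qed.

Lemma redp_int (a : int) : redp p (a%:~R) = phi a.
Proof. by rewrite /redp numq_int denq_int divr1. Qed.

Lemma phiX (z : int) k : phi (z ^+ k) = phi z ^+ k.
Proof. exact: rmorphXn. Qed.

Lemma sq0 : (0 : 'F_p) ^+ 2 = 0.
Proof. by rewrite expr2 mulr0. Qed.

Lemma phiP : phi P = 0.
Proof. exact: pchar_Fp_0. Qed.

Lemma P0 : P != 0.
Proof. by rewrite eqz_nat; case: p pp. Qed.

Lemma dvd2_phi z : (P ^+ 2 %| z)%Z -> phi z = 0.
Proof. by move=> h; apply/eqP; rewrite -phi0; apply: dvdz_trans h; rewrite expr2 dvdz_mulr. Qed.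

Lemma dvdP2 z : (P ^+ 2 %| P * z)%Z -> phi z = 0.
Proof. by rewrite expr2 dvdz_mul2l ?P0 // phi0 => /eqP. Qed.

Lemma phi_dvd z : phi z = 0 -> exists a, z = P * a.
Proof. by move/eqP; rewrite -phi0 => /dvdzP [a ->]; exists a; rewrite mulrC. Qed.

Lemma coh_const (c : int) : Zp_coherent p (fun _ => c).
Proof. by move=> k; rewrite eqxx. Qed.

Lemma coh_mul (x y : nat -> int) : Zp_coherent p x -> Zp_coherent p y ->
  Zp_coherent p (fun k => x k * y k).
Proof.
move=> hx hy k; move: (hx k) (hy k); rewrite !eqz_mod_dvd => h1 h2.
have -> : x k.+1 * y k.+1 - x k * y k = x k.+1 * (y k.+1 - y k) + (x k.+1 - x k) * y k by ring.
by apply: rpredD; [apply: dvdz_mull | apply: dvdz_mulr].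
Qed.

Lemma sqrt_of (x : 'F_p) : exists y : int, phi y = x.
Proof. by exists (x : nat)%:Z; rewrite phi_inv. Qed.

Lemma case1_nec e1 e2 e3 d1 d2 d3 n (n' : int) (s : int) :
  n%:Z = P * n' -> ~~ (P %| n')%Z -> ~~ (P %| e1)%Z ->
  ~~ (P %| d1 * d2 * d3)%Z -> d1 * d2 * d3 = s ^+ 2 ->
  D_Qp_nonempty p e1 e2 e3 d1 d2 d3 n ->
  [/\ legendre (d1%:~R) p = 1, legendre (d2%:~R) p = 1 & legendre (d3%:~R) p = 1].
Proof.
move=> en hn' he1 hd hs hP.
have [T [U1 [U2 [U3 [hprim h1 h2 h3]]]]] := descent hP.
have pn : phi (n%:Z) = 0 by rewrite en intrM phiP mul0r.
have := dvd2_phi h2; rewrite /F2 !(intrB,intrD,intrM,intrN,phiX) pn mulr0 mul0r add0r.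
move=> /eqP; rewrite subr_eq0 => /eqP E2.
have := dvd2_phi h3; rewrite /F3 !(intrB,intrD,intrM,intrN,phiX) pn mulr0 mul0r add0r.
move=> /eqP; rewrite subr_eq0 => /eqP E3.
move: hd; rewrite phi0 !intrM !mulf_eq0 !negb_or => /andP [/andP [hd1 hd2] hd3].
have hs' : phi d1 * phi d2 * phi d3 = phi s ^+ 2 by rewrite -!intrM -phiX hs.
have hU1 : phi U1 != 0.
  apply/negP => /eqP u10.
  have u20 : phi U2 = 0.
    by move: E3; rewrite u10 sq0 mulr0 => /esym/eqP; rewrite mulf_eq0 (negbTE hd2) expf_eq0 /= => /eqP.
  have u30 : phi U3 = 0.
    by move: E2; rewrite u10 sq0 mulr0 => /eqP; rewrite mulf_eq0 (negbTE hd3) expf_eq0 /= => /eqP.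
  have [a ea] := phi_dvd u20; have [b eb] := phi_dvd u30.
  have : (P ^+ 2 %| P * (e1 * n' * T ^+ 2 + P * (d2 * a ^+ 2 - d3 * b ^+ 2)))%Z.
    by move: h1; rewrite /F1 en ea eb; congr (_ %| _)%Z; ring.
  move=> /dvdP2; rewrite !(intrB,intrD,intrM,intrN,phiX) phiP mul0r addr0.
  move=> /eqP; rewrite !mulf_eq0 -!phi0 (negbTE he1) (negbTE hn') /= orbb => hT.
  by case/negP: hprim; rewrite hT !phi0 u10 u20 u30 eqxx.
have hU2 : phi U2 != 0.
  apply: contra hU1 => /eqP u20; move: E3; rewrite u20 sq0 mulr0 => /eqP.
  by rewrite mulf_eq0 (negbTE hd1) expf_eq0.
have hU3 : phi U3 != 0.
  apply: contra hU1 => /eqP u30; move: E2; rewrite u30 sq0 mulr0 => /esym/eqP.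
  by rewrite mulf_eq0 (negbTE hd1) expf_eq0.
have ed1 : phi d1 = phi d3 * phi U3 ^+ 2 / phi U1 ^+ 2.
  by rewrite E2 mulfK // expf_neq0.
have ed2 : phi d2 = phi d3 * phi U3 ^+ 2 / phi U2 ^+ 2.
  by rewrite E2 E3 mulfK // expf_neq0.
rewrite /legendre !redp_int; split; apply/legendreF1; split=> //.
- exists (phi s * phi U2 * phi U3 / (phi d1 * phi U1 ^+ 2)).
  rewrite expr_div_n !exprMn -hs' ed1 ed2; field.
  by rewrite ?hU1 ?hU2 ?hU3 ?hd3.
- exists (phi s * phi U1 * phi U3 / (phi d2 * phi U2 ^+ 2)).
  rewrite expr_div_n !exprMn -hs' ed1 ed2; field.
  by rewrite ?hU1 ?hU2 ?hU3 ?hd3.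
- exists (phi s * phi U1 * phi U2 / (phi d3 * phi U3 ^+ 2)).
  rewrite expr_div_n !exprMn -hs' ed1 ed2; field.
  by rewrite ?hU1 ?hU2 ?hU3 ?hd3.
Qed.

Lemma leg_sqrt (a b : int) : ~~ (P %| b)%Z -> odd p ->
  legendreF (phi a / phi b) = 1 ->
  exists r : nat -> int, Zp_coherent p r /\ (forall k, ((p ^ k)%:Z %| r k ^+ 2 - a * b)%Z)
    /\ phi (a * b) != 0.
Proof.
move=> hb op /legendreF1 [hab [x hx]].
have hbF : phi b != 0 by rewrite -phi0.
have ha : phi a != 0 by apply: contra hab => /eqP ->; rewrite mul0r.
have hab' : phi (a * b) != 0 by rewrite intrM mulf_neq0.
have [y hy] := sqrt_of (x * phi b).
have hy2 : (P %| y ^+ 2 - a * b)%Z.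
  by rewrite phi0 intrB phiX hy exprMn hx intrM expr2 mulrA divfK // subrr.
have [r [hr1 hr2]] := hensel op hab' hy2.
by exists r.
Qed.

Lemma sq_unit (r : nat -> int) (a : int) : phi a != 0 ->
  ((p ^ 1)%:Z %| r 1%N ^+ 2 - a)%Z -> phi (r 1%N) != 0.
Proof.
move=> ha; rewrite expn1 phi0 intrB phiX => /eqP h.
apply: contra ha => /eqP h0; move: h; rewrite h0 sq0 sub0r => /eqP.
by rewrite oppr_eq0.
Qed.

Lemma case1_suf e1 e2 e3 d1 d2 d3 n : odd p ->
  [/\ legendre (d1%:~R) p = 1, legendre (d2%:~R) p = 1 & legendre (d3%:~R) p = 1] ->
  D_Qp_nonempty p e1 e2 e3 d1 d2 d3 n.
Proof.
move=> op; rewrite /legendre !redp_int => -[l1 l2 l3].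
have P1 : ~~ (P %| 1)%Z by rewrite phi0 oner_eq0.
have gen : forall d : int, legendreF (phi d) = 1 -> exists r : nat -> int,
    Zp_coherent p r /\ (forall k, ((p ^ k)%:Z %| r k ^+ 2 - d)%Z) /\ phi d != 0.
  move=> d hd; have := @leg_sqrt d 1 P1 op; rewrite mulr1 => H; apply: H.
  by rewrite rmorph1 divr1.
have [r1 [c1 [k1 n1]]] := gen _ l1.
have [r2 [c2 [k2 n2]]] := gen _ l2.
have [r3 [c3 [k3 n3]]] := gen _ l3.
exists (fun _ => 0), (fun k => r2 k * r3 k), (fun k => r1 k * r3 k), (fun k => r1 k * r2 k).
split.
- by split; [apply: coh_const | apply: coh_mul ..].
- right; left; exists 1%N; rewrite PoszX' expr1 phi0 intrM.
  by rewrite mulf_neq0 // ?(sq_unit n2 (k2 1%N)) ?(sq_unit n3 (k3 1%N)).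
- move=> k /=; rewrite PoszX'.
  have := k1 k; have := k2 k; have := k3 k; rewrite !PoszX' => h3 h2 h1.
  split.
  + have -> : e1 * n%:Z * 0 ^+ 2 + d2 * (r1 k * r3 k) ^+ 2 - d3 * (r1 k * r2 k) ^+ 2
       = (r1 k ^+ 2 * r2 k ^+ 2) * (r3 k ^+ 2 - d3) - (r1 k ^+ 2 * r3 k ^+ 2) * (r2 k ^+ 2 - d2) by ring.
    by apply: rpredB; apply: dvdz_mull.
  + have -> : e2 * n%:Z * 0 ^+ 2 + d3 * (r1 k * r2 k) ^+ 2 - d1 * (r2 k * r3 k) ^+ 2
       = (r2 k ^+ 2 * r3 k ^+ 2) * (r1 k ^+ 2 - d1) - (r1 k ^+ 2 * r2 k ^+ 2) * (r3 k ^+ 2 - d3) by ring.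
    by apply: rpredB; apply: dvdz_mull.
  + have -> : e3 * n%:Z * 0 ^+ 2 + d1 * (r2 k * r3 k) ^+ 2 - d2 * (r1 k * r3 k) ^+ 2
       = (r1 k ^+ 2 * r3 k ^+ 2) * (r2 k ^+ 2 - d2) - (r2 k ^+ 2 * r3 k ^+ 2) * (r1 k ^+ 2 - d1) by ring.
    by apply: rpredB; apply: dvdz_mull.
Qed.

Lemma rot e1 e2 e3 d1 d2 d3 n : D_Qp_nonempty p e1 e2 e3 d1 d2 d3 n ->
  D_Qp_nonempty p e2 e3 e1 d2 d3 d1 n.
Proof.
move=> [t [u1 [u2 [u3 [[ct c1 c2 c3] hnz hF]]]]]; exists t, u2, u3, u1; split.
- by split.
- by case: hnz => [h|[h|[h|h]]]; [left|right;right;right|right;left|right;right;left].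
- by move=> k; case: (hF k) => /= h1 h2 h3; split.
Qed.

Lemma dvd_eqr (d x y : int) : x = y -> (d %| y)%Z -> (d %| x)%Z.
Proof. by move=> ->. Qed.

Lemma rat_rw (a n' d' : int) : d' != 0 ->
  (a%:~R * (P * n')%:~R / (P * d')%:~R : rat) = (a * n')%:~R / d'%:~R.
Proof.
move=> hd; have hP : ((P%:~R) : rat) != 0 by rewrite intr_eq0 P0.
have hd' : ((d'%:~R) : rat) != 0 by rewrite intr_eq0.
by rewrite !intrM; field; rewrite hd' /=; exact: hP.
Qed.

Lemma case2 e1 e2 e3 d1 d2 d3 n (n' d2' d3' s : int) : odd p ->
  n%:Z = P * n' -> ~~ (P %| n')%Z -> ~~ (P %| e2)%Z -> ~~ (P %| e3)%Z ->
  e1 + e2 + e3 = 0 -> ~~ (P %| d1)%Z ->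
  d2 = P * d2' -> ~~ (P %| d2')%Z -> d3 = P * d3' -> ~~ (P %| d3')%Z ->
  d1 * d2 * d3 = s ^+ 2 ->
  (D_Qp_nonempty p e1 e2 e3 d1 d2 d3 n <->
    [/\ legendre ((- e2 * e3 * d1)%:~R) p = 1,
        legendre (e3%:~R * n%:R / d2%:~R) p = 1
      & legendre (- e2%:~R * n%:R / d3%:~R) p = 1]).
Proof.
move=> op en hn' he2 he3 hsum hd1 ed2 hd2 ed3 hd3 hs.
have hd2F : phi d2' != 0 by rewrite -phi0.
have hd3F : phi d3' != 0 by rewrite -phi0.
have hd1F : phi d1 != 0 by rewrite -phi0.
have hn'F : phi n' != 0 by rewrite -phi0.
have he2F : phi e2 != 0 by rewrite -phi0.
have he3F : phi e3 != 0 by rewrite -phi0.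
have d2'0 : d2' != 0 by apply: contra hd2 => /eqP ->; exact: dvdz0.
have d3'0 : d3' != 0 by apply: contra hd3 => /eqP ->; exact: dvdz0.
have nR : (n%:R : rat) = (n%:Z)%:~R by [].
have r2 : (e3%:~R * n%:R / d2%:~R : rat) = (e3 * n')%:~R / d2'%:~R.
  by rewrite nR en ed2 rat_rw.
have r3 : (- e2%:~R * n%:R / d3%:~R : rat) = ((- e2) * n')%:~R / d3'%:~R.
  by rewrite nR en ed3 -intrN rat_rw.
rewrite /legendre r2 r3 !redp_frac // redp_int.
split.
- move=> hP.
  have [T [U1 [U2 [U3 [hprim h1 h2 h3]]]]] := descent hP.
  have pn : phi (n%:Z) = 0 by rewrite en intrM phiP mul0r.
  have pd2 : phi d2 = 0 by rewrite ed2 intrM phiP mul0r.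
  have pd3 : phi d3 = 0 by rewrite ed3 intrM phiP mul0r.
  have u10 : phi U1 = 0.
    move: (dvd2_phi h2); rewrite /F2 !(intrB,intrD,intrM,intrN,phiX) pn pd3.
    rewrite mulr0 !mul0r add0r sub0r => /eqP; rewrite oppr_eq0 mulf_eq0 (negbTE hd1F) /=.
    by rewrite expf_eq0 /= => /eqP.
  have [V1 eV1] := phi_dvd u10.
  have E2 : phi d3' * phi U3 ^+ 2 = - (phi e2 * phi n' * phi T ^+ 2).
    have : (P ^+ 2 %| P * (e2 * n' * T ^+ 2 + d3' * U3 ^+ 2 - P * d1 * V1 ^+ 2))%Z.
      by move: h2; rewrite /F2 en ed3 eV1; congr (_ %| _)%Z; ring.
    move=> /dvdP2; rewrite !(intrB,intrD,intrM,intrN,phiX) phiP !mul0r subr0.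
    by move=> /eqP; rewrite addrC addr_eq0 => /eqP.
  have E3 : phi d2' * phi U2 ^+ 2 = phi e3 * phi n' * phi T ^+ 2.
    have : (P ^+ 2 %| P * (e3 * n' * T ^+ 2 + P * d1 * V1 ^+ 2 - d2' * U2 ^+ 2))%Z.
      by move: h3; rewrite /F3 en ed2 eV1; congr (_ %| _)%Z; ring.
    move=> /dvdP2; rewrite !(intrB,intrD,intrM,intrN,phiX) phiP !mul0r addr0.
    by move=> /eqP; rewrite subr_eq0 => /eqP.
  have hT : phi T != 0.
    apply/negP => /eqP t0.
    have u20 : phi U2 = 0.
      move: E3; rewrite t0 sq0 mulr0 => /eqP; rewrite mulf_eq0 (negbTE hd2F) /=.
      by rewrite expf_eq0 /= => /eqP.
    have u30 : phi U3 = 0.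
      move: E2; rewrite t0 sq0 mulr0 oppr0 => /eqP; rewrite mulf_eq0 (negbTE hd3F) /=.
      by rewrite expf_eq0 /= => /eqP.
    by case/negP: hprim; rewrite !phi0 t0 u10 u20 u30 eqxx.
  have [s' es'] : exists s', s = P * s'.
    apply: phi_dvd.
    have : phi s ^+ 2 = 0 by rewrite -phiX -hs !intrM pd2 mulr0 mul0r.
    by move/eqP; rewrite expf_eq0 /= => /eqP.
  have hs' : phi d1 * phi d2' * phi d3' = phi s' ^+ 2.
    rewrite -!intrM -phiX; congr (phi _).
    apply: (@mulfI _ (P * P)); first by rewrite mulf_neq0 ?P0.
    transitivity (d1 * d2 * d3); first by rewrite ed2 ed3; ring.
    by rewrite hs es'; ring.
  have eU2 : phi U2 ^+ 2 = phi e3 * phi n' * phi T ^+ 2 / phi d2'.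
    by rewrite -E3 [_ * _ ^+ 2]mulrC mulfK.
  have eU3 : phi U3 ^+ 2 = - (phi e2 * phi n' * phi T ^+ 2) / phi d3'.
    by rewrite -E2 [_ * _ ^+ 2]mulrC mulfK.
  split; apply/legendreF1.
  + split.
      by rewrite !(intrM,intrN); apply: mulf_neq0; [apply: mulf_neq0|]; rewrite ?oppr_eq0.
    exists (phi U2 * phi U3 * phi s' / (phi T ^+ 2 * phi n')).
    rewrite expr_div_n !exprMn eU2 eU3 -hs' !(intrM,intrN); field.
    by rewrite hT hn'F hd2F hd3F.
  + split; first by rewrite !(intrM,intrN); apply: mulf_neq0; [apply: mulf_neq0 | rewrite invr_eq0]; rewrite ?oppr_eq0.
    exists (phi U2 / phi T); rewrite expr_div_n eU2 intrM; field.
    by rewrite hT hd2F.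
  + split; first by rewrite !(intrM,intrN); apply: mulf_neq0; [apply: mulf_neq0 | rewrite invr_eq0]; rewrite ?oppr_eq0.
    exists (phi U3 / phi T); rewrite expr_div_n eU3 !(intrM,intrN); field.
    by rewrite hT hd3F.
- move=> [_ l2 l3].
  have [q2 [c2 [k2 n2]]] := leg_sqrt hd2 op l2.
  have [q3 [c3 [k3 n3]]] := leg_sqrt hd3 op l3.
  have ee1 : e1 = (e1 + e2 + e3) - e2 - e3 by ring.
  rewrite hsum sub0r in ee1.
  exists (fun _ => d2' * d3'), (fun _ => 0), (fun k => d3' * q2 k), (fun k => d2' * q3 k).
  split.
  + split; [exact: coh_const | exact: coh_const | exact: (coh_mul (coh_const d3') c2)
           | exact: (coh_mul (coh_const d2') c3)].
  + left; exists 1%N; rewrite PoszX' expr1 phi0 intrM mulf_neq0 //.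
  + move=> k /=; have := k2 k; have := k3 k; rewrite !PoszX' => h3 h2.
    rewrite en ed2 ed3 ee1; split.
    * apply: (dvd_eqr (y := (P * d2' * d3' ^+ 2) * (q2 k ^+ 2 - e3 * n' * d2')
                 - (P * d2' ^+ 2 * d3') * (q3 k ^+ 2 - - e2 * n' * d3'))); first ring.
      by apply: rpredB; apply: dvdz_mull.
    * apply: (dvd_eqr (y := (P * d2' ^+ 2 * d3') * (q3 k ^+ 2 - - e2 * n' * d3'))); first ring.
      by apply: dvdz_mull.
    * apply: (dvd_eqr (y := - ((P * d2' * d3' ^+ 2) * (q2 k ^+ 2 - e3 * n' * d2')))); first ring.
      by rewrite rpredN; apply: dvdz_mull.
Qed.

End Fp.

Lemma split_sqf (p : nat) (pp : prime p) (d : int) : sqfree (absz d) -> (p%:Z %| d)%Z ->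
  exists d', d = p%:Z * d' /\ ~~ (p%:Z %| d')%Z.
Proof.
move=> sq /dvdzP [q eq]; exists q; split; first by rewrite eq mulrC.
apply/negP => /dvdzP [r er]; have := sq p pp; rewrite eq er !abszM /=.
by rewrite -mulnA dvdn_mull.
Qed.

Lemma not_dvd_e (p n : nat) (pp : prime p) (e E : int) : (p %| n)%N ->
  coprime n (absz E) -> (e %| E)%Z -> ~~ (p%:Z %| e)%Z.
Proof.
move=> hpn hc heE; apply/negP => hpe.
have := dvdz_trans hpe heE; rewrite dvdzE /= => hpE.
move: hc; rewrite /coprime => /eqP g.
have : (p %| gcdn n `|E|)%N by rewrite dvdn_gcd hpn hpE.
by rewrite g dvdn1 => /eqP p1; move: pp; rewrite p1.
Qed.

Lemma rotP p e1 e2 e3 d1 d2 d3 n : D_Qp_nonempty p e1 e2 e3 d1 d2 d3 n <->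
  D_Qp_nonempty p e2 e3 e1 d2 d3 d1 n.
Proof. by split=> [|h]; [apply: rot | apply: rot; apply: rot]. Qed.

Lemma rotP2 p e1 e2 e3 d1 d2 d3 n : D_Qp_nonempty p e1 e2 e3 d1 d2 d3 n <->
  D_Qp_nonempty p e3 e1 e2 d3 d1 d2 n.
Proof. by split=> [h|]; [apply: rot; apply: rot | apply: rot]. Qed.

Theorem lemma2p5 (e1 e2 e3 d1 d2 d3 : int) (n p : nat)
  (he1 : e1 != 0) (he2 : e2 != 0) (he3 : e3 != 0) (hsum : e1 + e2 + e3 = 0)
  (hd1 : d1 != 0) (hd2 : d2 != 0) (hd3 : d3 != 0)
  (sqd1 : sqfreez d1) (sqd2 : sqfreez d2) (sqd3 : sqfreez d3)
  (hsq : exists s : int, d1 * d2 * d3 = s ^+ 2)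
  (hn : (0 < n)%N) (sqn : sqfree n) (hcop : coprime n (absz (e1 * e2 * e3)))
  (hp : prime p) (hodd : odd p) (hpn : (p %| n)%N) :
  let P := D_Qp_nonempty p e1 e2 e3 d1 d2 d3 n in
  let q (x : int) : rat := x%:~R in
  [/\ ~~ (p%:Z %| d1 * d2 * d3)%Z ->
        (P <-> [/\ legendre (q d1) p = 1, legendre (q d2) p = 1
                 & legendre (q d3) p = 1]),
      [&& ~~ (p%:Z %| d1)%Z, (p%:Z %| d2)%Z & (p%:Z %| d3)%Z] ->
        (P <-> [/\ legendre (q (- e2 * e3 * d1)) p = 1,
                   legendre (q e3 * n%:R / q d2) p = 1
                 & legendre (- q e2 * n%:R / q d3) p = 1]),
      [&& (p%:Z %| d1)%Z, ~~ (p%:Z %| d2)%Z & (p%:Z %| d3)%Z] ->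
        (P <-> [/\ legendre (- q e3 * n%:R / q d1) p = 1,
                   legendre (q (- e3 * e1 * d2)) p = 1
                 & legendre (q e1 * n%:R / q d3) p = 1])
    & [&& (p%:Z %| d1)%Z, (p%:Z %| d2)%Z & ~~ (p%:Z %| d3)%Z] ->
        (P <-> [/\ legendre (q e2 * n%:R / q d1) p = 1,
                   legendre (- q e1 * n%:R / q d2) p = 1
                 & legendre (q (- e1 * e2 * d3)) p = 1])].
Proof.
move=> P q; rewrite /P /q {P q}.
have [s hs] := hsq.
have [n' [en hn']] := @split_sqf p hp (n%:Z) sqn hpn.
have he1' : ~~ (p%:Z %| e1)%Z.
  by apply: (not_dvd_e hp hpn hcop); rewrite -mulrA dvdz_mulr.
have he2' : ~~ (p%:Z %| e2)%Z.
  by apply: (not_dvd_e hp hpn hcop); apply: dvdz_mulr; apply: dvdz_mull.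
have he3' : ~~ (p%:Z %| e3)%Z.
  by apply: (not_dvd_e hp hpn hcop); apply: dvdz_mull.
split.
- move=> hd; split; first by move=> h; exact: (case1_nec hp en hn' he1' hd hs h).
  by move=> h; apply: case1_suf.
- case/and3P=> h1 h2 h3.
  have [d2' [ed2 hd2']] := split_sqf hp sqd2 h2.
  have [d3' [ed3 hd3']] := split_sqf hp sqd3 h3.
  have H := case2 hp hodd en hn' he2' he3' hsum h1 ed2 hd2' ed3 hd3' hs.
  exact H.
- case/and3P=> h1 h2 h3.
  have [d3' [ed3 hd3']] := split_sqf hp sqd3 h3.
  have [d1' [ed1 hd1']] := split_sqf hp sqd1 h1.
  have hsum' : e2 + e3 + e1 = 0 by rewrite -hsum; ring.
  have hs' : d2 * d3 * d1 = s ^+ 2 by rewrite -hs; ring.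
  have H := case2 hp hodd en hn' he3' he1' hsum' h2 ed3 hd3' ed1 hd1' hs'.
  apply: (iff_trans (rotP _ _ _ _ _ _ _ _)); apply: (iff_trans H).
  by split=> -[? ? ?]; split.
- case/and3P=> h1 h2 h3.
  have [d1' [ed1 hd1']] := split_sqf hp sqd1 h1.
  have [d2' [ed2 hd2']] := split_sqf hp sqd2 h2.
  have hsum' : e3 + e1 + e2 = 0 by rewrite -hsum; ring.
  have hs' : d3 * d1 * d2 = s ^+ 2 by rewrite -hs; ring.
  have H := case2 hp hodd en hn' he1' he2' hsum' h3 ed1 hd1' ed2 hd2' hs'.
  apply: (iff_trans (rotP2 _ _ _ _ _ _ _ _)); apply: (iff_trans H).
  by split=> -[? ? ?]; split.
Qed.
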